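(* Let $X\ge 0$ be a gamble and let $\underline{P}$ be a 2-coherent lower prevision (defined on a domain containing the gambles involved) with conjugate upper prevision $\overline{P}$. Then $[\underline{P}(X)]^2\le\underline{P}(X^2)$ and $[\overline{P}(X)]^2\le\overline{P}(X^2)$.
   Context: $\Pi$ is a partition of the sure event into pairwise disjoint non-impossible events; a gamble is a bounded map $X:\Pi\to\mathbb{R}$. A lower prevision $\underline{P}:\mathcal{D}\to\mathbb{R}$ is 2-coherent iff for all $X_0,X_1\in\mathcal{D}$, $s_1\ge 0$, $s_0\in\mathbb{R}$, $\sup[s_1(X_1-\underline{P}(X_1))-s_0(X_0-\underline{P}(X_0))]\ge 0$; its conjugate is $\overline{P}(Y)=-\underline{P}(-Y)$. *)

(* Defs.v *)
From HB Require Import structures.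
From mathcomp Require Import all_boot all_order all_algebra.
From mathcomp Require Import classical_sets reals.
Set Implicit Arguments. Unset Strict Implicit. Unset Printing Implicit Defensive.
Import Order.TTheory GRing.Theory Num.Theory.
Local Open Scope classical_set_scope.
Local Open Scope ring_scope.

(* The partition Pi is modelled as a type whose elements are the atoms;
   a gamble is a bounded real map on Pi. *)
Definition gamble (R : realType) (Pi : Type) (X : Pi -> R) : Prop :=
  exists M : R, forall w, `|X w| <= M.

Definition gneg (R : realType) (Pi : Type) (X : Pi -> R) : Pi -> R :=
  fun w => - X w.
Definition gsq (R : realType) (Pi : Type) (X : Pi -> R) : Pi -> R :=
  fun w => X w ^+ 2.

Definition two_coherent (R : realType) (Pi : Type)
    (D : set (Pi -> R)) (LP : (Pi -> R) -> R) : Prop :=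
  forall X0 X1 : Pi -> R, D X0 -> D X1 ->
  forall s1 s0 : R, 0 <= s1 ->
    0 <= sup (range (fun w => s1 * (X1 w - LP X1) - s0 * (X0 w - LP X0))).

Definition conj_upper (R : realType) (Pi : Type)
    (LP : (Pi -> R) -> R) (Y : Pi -> R) : R :=
  - LP (gneg Y).

(* Main.v *)
Require Import Defs.
From HB Require Import structures.
From mathcomp Require Import all_boot all_order all_algebra.
From mathcomp Require Import classical_sets reals.
From mathcomp Require Import ring lra.
Import Order.TTheory GRing.Theory Num.Theory.
Local Open Scope classical_set_scope.
Local Open Scope ring_scope.

Lemma sup_bound {R : realType} {Pi : Type} (Pi_ne : inhabited Pi) {f : Pi -> R} {K : R} :
  (forall w, f w <= K) -> 0 <= sup (range f) -> 0 <= K.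
Proof.
move=> hf h; apply: (le_trans h); apply: ge_sup.
  by case: Pi_ne => w; exists (f w); exists w.
by move=> _ [w _ <-].
Qed.

Theorem corollary3 (R : realType) (Pi : Type) (Pi_ne : inhabited Pi)
    (D : set (Pi -> R)) (LP : (Pi -> R) -> R)
    (D_gambles : forall Y, D Y -> gamble Y)
    (LP_coh : two_coherent D LP)
    (X : Pi -> R) (X_gamble : gamble X) (X_ge0 : forall w, 0 <= X w) :
  (D X -> D (gsq X) -> LP X ^+ 2 <= LP (gsq X)) /\
  (D (gneg X) -> D (gneg (gsq X)) ->
     conj_upper LP X ^+ 2 <= conj_upper LP (gsq X)).
Proof.
split.
- move=> DX DX2.
  set a := LP X; set b := LP (gsq X).
  have a0 : 0 <= a.
    have := LP_coh _ _ DX DX 0 1 (lexx 0).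
    move=> /(sup_bound Pi_ne) H.
    rewrite -[a]subr0; apply: H => w.
    have := X_ge0 w; rewrite -/a; lra.
  have h2 : 0 <= 2 * a by lra.
  have := LP_coh _ _ DX2 DX (2 * a) 1 h2.
  move=> /(sup_bound Pi_ne) H.
  rewrite -subr_ge0; apply: H => w.
  rewrite /gsq -/a -/b.
  have -> : 2 * a * (X w - a) - 1 * (X w ^+ 2 - b) = (b - a ^+ 2) - (X w - a) ^+ 2 by ring.
  by rewrite lerBlDr lerDl sqr_ge0.
- move=> DX DX2.
  rewrite /conj_upper.
  set c := LP (gneg X); set d := LP (gneg (gsq X)).
  have := LP_coh _ _ DX DX2 1 (-2 * c) ler01.
  move=> /(sup_bound Pi_ne) H.
  rewrite -subr_ge0; apply: H => w.
  rewrite /gneg /gsq -/c -/d.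
  have -> : 1 * (- X w ^+ 2 - d) - -2 * c * (- X w - c) = (- d - (- c) ^+ 2) - (X w + c) ^+ 2 by ring.
  by rewrite lerBlDr lerDl sqr_ge0.
Qed.
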